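(* Let $\mathcal{K}=(\mathcal{R},\mathcal{T})$ be an ME-consistent $\mathcal{ALCP}$ knowledge base over $\mathcal{L}$, $C,D$ concepts, and $\kappa\in\mathcal{L}$ with $P^{ME}_{\mathcal{R}}(\kappa)>0$. Then $$\mathcal{B}^{c}_{\mathcal{K}}(C\sqsubseteq D\mid\kappa)=1-\frac{\sum_{w\in\mathrm{Int}(\mathcal{L}),\ C \text{ is strongly non-subsumed by } D \text{ w.r.t. } \mathcal{T}_w,\ w\models\kappa}P^{ME}_{\mathcal{R}}(w)}{P^{ME}_{\mathcal{R}}(\kappa)}.$$
   Context: $\mathcal{L}$ is a propositional language over a finite set of variables; $\mathrm{Int}(\mathcal{L})$ is the set of truth assignments. A probability distribution over $\mathcal{L}$ is $P:\mathrm{Int}(\mathcal{L})\to[0,1]$ summing to $1$, with $P(\phi)=\sum_{v\models\phi}P(v)$. A probabilistic constraint is $c_0+\sum_{i=1}^k c_i\,\mathsf{p}(\phi_i)\ge 0$ ($c_i\in\mathbb{R}$, $\phi_i\in\mathcal{L}$), satisfied by $P$ iff $c_0+\sum_ic_iP(\phi_i)\ge0$; $\mathrm{Mod}(\mathcal{R})$ is the set of distributions satisfying all constraints in $\mathcal{R}$; for consistent $\mathcal{R}$, $P^{ME}_{\mathcal{R}}$ is the unique maximizer in $\mathrm{Mod}(\mathcal{R})$ of $H(P)=-\sum_vP(v)\log P(v)$. Concepts: $C::=A\mid\neg C\mid C\sqcap C\mid\exists r.C$. An $\mathcal{L}$-GCI is $\langle C\sqsubseteq D:\kappa\rangle$,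 $\kappa\in\mathcal{L}$; an $\mathcal{L}$-TBox is a finite set of them; a KB is $\mathcal{K}=(\mathcal{R},\mathcal{T})$. A possible world $\mathcal{I}=(\Delta^{\mathcal{I}},\cdot^{\mathcal{I}},v^{\mathcal{I}})$ is a classical $\mathcal{ALC}$ interpretation together with $v^{\mathcal{I}}\in\mathrm{Int}(\mathcal{L})$; it models $\langle C\sqsubseteq D:\kappa\rangle$ iff $v^{\mathcal{I}}\not\models\kappa$ or $C^{\mathcal{I}}\subseteq D^{\mathcal{I}}$. For $w\in\mathrm{Int}(\mathcal{L})$, $\mathcal{T}_w=\{C\sqsubseteq D\mid\langle C\sqsubseteq D:\kappa\rangle\in\mathcal{T}, w\models\kappa\}$; $C$ is strongly non-subsumed by $D$ w.r.t. $\mathcal{T}_w$ iff $C^{\mathcal{I}}\not\subseteq D^{\mathcal{I}}$ in every classical interpretation satisfying all inclusions of $\mathcal{T}_w$. An $\mathcal{ALCP}$-interpretation $\mathcal{P}=(\mathfrak{I},P_{\mathfrak{I}})$ is a nonempty finite set of possible worlds with a probability distribution on it; $P^{\mathcal{P}}(v)=\sum_{\mathcal{I}\in\mathfrak{I},v^{\mathcal{I}}=v}P_{\mathfrak{I}}(\mathcal{I})$. $\mathcal{P}$ is an ME-$\mathcal{ALCP}$-model of $\mathcal{K}$ iff all its worlds model every GCI of $\mathcal{T}$ and $P^{\mathcal{P}}=P^{ME}_{\mathcal{R}}$; $\mathrm{Mod}_{ME}(\mathcal{K})$ is the set of these; $\mathcal{K}$ is ME-consistent iff it is nonempty. $\Pr_{\mathcal{P}}(C\sqsubseteq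 D\mid\kappa)=\big(\sum_{\mathcal{I}\in\mathfrak{I},v^{\mathcal{I}}\models\kappa,C^{\mathcal{I}}\subseteq D^{\mathcal{I}}}P_{\mathfrak{I}}(\mathcal{I})\big)/\big(\sum_{\mathcal{I}\in\mathfrak{I},v^{\mathcal{I}}\models\kappa}P_{\mathfrak{I}}(\mathcal{I})\big)$. The credulous degree of belief is $\mathcal{B}^{c}_{\mathcal{K}}(C\sqsubseteq D\mid\kappa)=\sup_{\mathcal{P}\in\mathrm{Mod}_{ME}(\mathcal{K})}\Pr_{\mathcal{P}}(C\sqsubseteq D\mid\kappa)$. *)

(* Defs.v *)
From HB Require Import structures.
From mathcomp Require Import all_boot all_order all_algebra.
From mathcomp Require Import boolp classical_sets reals exp.
From Stdlib Require List.
Unset Printing Implicit Defensive.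
Import Order.TTheory GRing.Theory Num.Theory.
Local Open Scope ring_scope.

Inductive pformula (n : nat) : Type :=
  | PTop : pformula n
  | PVar : 'I_n -> pformula n
  | PNeg : pformula n -> pformula n
  | PAnd : pformula n -> pformula n -> pformula n
  | POr  : pformula n -> pformula n -> pformula n.

Definition Int (n : nat) := {ffun 'I_n -> bool}.

Arguments PTop {n}. Arguments PVar {n}. Arguments PNeg {n}. Arguments PAnd {n}. Arguments POr {n}.

Fixpoint psat {n} (v : Int n) (f : pformula n) : bool :=
  match f with
  | PTop => true
  | PVar i => v i
  | PNeg g => ~~ psat v g
  | PAnd g h => psat v g && psat v h
  | POr g h => psat v g || psat v h
  end.

Section Prob.
Variables (R : realType) (n : nat).

Definition is_distr (P : {ffun Int n -> R}) : Prop :=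
  (forall v, 0 <= P v) /\ \sum_(v : Int n) P v = 1.

Definition probf (P : {ffun Int n -> R}) (phi : pformula n) : R :=
  \sum_(v : Int n | psat v phi) P v.

Record pconstr := PConstr { pc0 : R ; pcs : seq (R * pformula n) }.

Definition satc (P : {ffun Int n -> R}) (c : pconstr) : Prop :=
  0 <= pc0 c + \sum_(x <- pcs c) x.1 * probf P x.2.

Definition ModR (Rc : seq pconstr) (P : {ffun Int n -> R}) : Prop :=
  is_distr P /\ forall c, List.In c Rc -> satc P c.

Definition consistent (Rc : seq pconstr) : Prop := exists P, ModR Rc P.

(* entropy H(P) = - sum_v P(v) log P(v)   (0 log 0 = 0 since 0 * _ = 0) *)
Definition entropy (P : {ffun Int n -> R}) : R :=
  - \sum_(v : Int n) P v * ln (P v).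

Definition is_ME (Rc : seq pconstr) (P : {ffun Int n -> R}) : Prop :=
  ModR Rc P /\ forall Q, ModR Rc Q -> entropy Q <= entropy P.

(* P^ME_R: the (unique, for consistent R) maximizer of entropy in Mod(R) *)
Definition PME (Rc : seq pconstr) : {ffun Int n -> R} :=
  xget 0 [set P | is_ME Rc P].

End Prob.
Arguments is_distr {R n}. Arguments probf {R n}. Arguments PConstr {R n}.
Arguments pc0 {R n}. Arguments pcs {R n}. Arguments satc {R n}. Arguments ModR {R n}.
Arguments consistent {R n}. Arguments entropy {R n}. Arguments is_ME {R n}. Arguments PME {R n}.

Inductive concept : Type :=
  | CAtom : nat -> concept
  | CNeg : concept -> concept
  | CAnd : concept -> concept -> concept
  | CEx : nat -> concept -> concept.

Record alc_interp := ALCInterp {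
  dom : Type ;
  dom_inh : dom ;
  cint : nat -> dom -> Prop ;
  rint : nat -> dom -> dom -> Prop }.

Fixpoint cext (I : alc_interp) (C : concept) : dom I -> Prop :=
  match C with
  | CAtom a => cint I a
  | CNeg C' => fun x => ~ cext I C' x
  | CAnd C1 C2 => fun x => cext I C1 x /\ cext I C2 x
  | CEx r C' => fun x => exists y, rint I r x y /\ cext I C' y
  end.

Definition csub (I : alc_interp) (C D : concept) : Prop :=
  forall x, cext I C x -> cext I D x.

Record gci (n : nat) := GCI { gC : concept ; gD : concept ; gk : pformula n }.
Arguments GCI {n}. Arguments gC {n}. Arguments gD {n}. Arguments gk {n}.

Definition Tw {n} (T : seq (gci n)) (w : Int n) : seq (concept * concept) :=
  [seq (gC g, gD g) | g <- T & psat w (gk g)].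

Definition models_tbox (I : alc_interp) (T0 : seq (concept * concept)) : Prop :=
  forall p, List.In p T0 -> csub I p.1 p.2.

Definition strongly_nonsub {n} (T : seq (gci n)) (w : Int n) (C D : concept) : Prop :=
  forall I : alc_interp, models_tbox I (Tw T w) -> ~ csub I C D.

Record pworld (n : nat) := PWorld { wI : alc_interp ; wv : Int n }.
Arguments PWorld {n}. Arguments wI {n}. Arguments wv {n}.

Definition pworld_models {n} (W : pworld n) (g : gci n) : Prop :=
  ~~ psat (wv W) (gk g) \/ csub (wI W) (gC g) (gD g).

(* a nonempty finite set of possible worlds (indexed injectively by 'I_m)
   with a probability distribution on it *)
Record alcp_interp (R : realType) (n : nat) := ALCPInterp {
  nworlds : nat ;
  world : 'I_nworlds -> pworld n ;
  world_inj : injective world ;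
  wprob : 'I_nworlds -> R ;
  wprob_ge0 : forall i, 0 <= wprob i ;
  wprob_sum1 : \sum_(i < nworlds) wprob i = 1 }.
Arguments nworlds {R n}. Arguments world {R n}. Arguments world_inj {R n}.
Arguments wprob {R n}. Arguments wprob_ge0 {R n}. Arguments wprob_sum1 {R n}.

Section ALCP.
Variables (R : realType) (n : nat).

Definition marg (Pi : alcp_interp R n) : {ffun Int n -> R} :=
  [ffun v => \sum_(i < nworlds Pi | wv (world Pi i) == v) wprob Pi i].

Record KB := MkKB { kbR : seq (pconstr R n) ; kbT : seq (gci n) }.

Definition ME_model (K : KB) (Pi : alcp_interp R n) : Prop :=
  (forall i g, List.In g (kbT K) -> pworld_models (world Pi i) g) /\
  marg Pi = PME (kbR K).

(* K is ME-consistent: R is consistent (so P^ME_R is defined) and Mod_ME(K) is nonempty *)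
Definition ME_consistent (K : KB) : Prop :=
  consistent (kbR K) /\ exists Pi, ME_model K Pi.

Definition Pr (Pi : alcp_interp R n) (C D : concept) (k : pformula n) : R :=
  (\sum_(i < nworlds Pi | psat (wv (world Pi i)) k && `[< csub (wI (world Pi i)) C D >])
      wprob Pi i)
  / (\sum_(i < nworlds Pi | psat (wv (world Pi i)) k) wprob Pi i).

Definition Bc (K : KB) (C D : concept) (k : pformula n) : R :=
  sup [set x | exists Pi, ME_model K Pi /\ x = Pr Pi C D k].

End ALCP.
Arguments marg {R n}. Arguments MkKB {R n}. Arguments kbR {R n}. Arguments kbT {R n}.
Arguments ME_model {R n}. Arguments ME_consistent {R n}. Arguments Pr {R n}. Arguments Bc {R n}.

(* Main.v *)
Require Import Defs.
From HB Require Import structures.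
From mathcomp Require Import all_boot all_order all_algebra.
From mathcomp Require Import boolp classical_sets reals exp.
Import Order.TTheory GRing.Theory Num.Theory.
Local Open Scope ring_scope.

Lemma In_Tw {n} (T : seq (gci n)) w p :
  List.In p (Tw T w) -> exists g, List.In g T /\ psat w (gk g) /\ p = (gC g, gD g).
Proof.
rewrite /Tw; elim: T => //= g T IH.
case: ifP => Hg /=.
- case=> [<-|/IH [g' [H1 [H2 H3]]]]; first by exists g; split; [left|].
  by exists g'; split; [right|].
- by move=> /IH [g' [H1 [H2 H3]]]; exists g'; split; [right|].
Qed.

Lemma Tw_In {n} (T : seq (gci n)) w g :
  List.In g T -> psat w (gk g) -> List.In (gC g, gD g) (Tw T w).
Proof.
rewrite /Tw; elim: T => [[]|g' T IH] /= [<-|H] Hw; first by rewrite Hw /=; left.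
by case: ifP => _ /=; [right|]; apply: IH.
Qed.

Section S.
Variables (R : realType) (n : nat).

Lemma sum_marg (Pi : alcp_interp R n) (Q : pred (Int n)) :
  \sum_(i | Q (wv (world Pi i))) wprob Pi i = \sum_(v | Q v) marg Pi v.
Proof.
rewrite (partition_big (fun i => wv (world Pi i)) Q) //=.
apply: eq_bigr => v Qv; rewrite ffunE; apply: eq_bigl => i.
by case: eqP => [->|]; rewrite ?Qv ?andbF ?andbT.
Qed.

Lemma marg_ge0 (Pi : alcp_interp R n) v : 0 <= marg Pi v.
Proof. by rewrite ffunE; apply: sumr_ge0 => i _; apply: wprob_ge0. Qed.

Lemma marg_sum1 (Pi : alcp_interp R n) : \sum_v marg Pi v = 1.
Proof. by rewrite -(wprob_sum1 Pi) -(sum_marg Pi predT). Qed.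
End S.

Definition dfltI : alc_interp :=
  ALCInterp unit tt (fun _ _ => False) (fun _ _ _ => False).

Definition pickI {n} (T : seq (gci n)) (w : Int n) (C D : concept) : alc_interp :=
  match pselect (exists I, models_tbox I (Tw T w) /\ csub I C D) with
  | left h => proj1_sig (cid h)
  | right _ => match pselect (exists I, models_tbox I (Tw T w)) with
               | left h => proj1_sig (cid h)
               | right _ => dfltI end end.

Lemma pickI_models {n} (T : seq (gci n)) w C D :
  (exists I, models_tbox I (Tw T w)) -> models_tbox (pickI T w C D) (Tw T w).
Proof.
move=> H; rewrite /pickI; case: pselect => [h|_].
  by case: (cid h) => I [].
by case: pselect => [h|//]; case: (cid h).
Qed.

Lemma pickI_csub {n} (T : seq (gci n)) w C D :
  (exists I, models_tbox I (Tw T w) /\ csub I C D) -> csub (pickI T w C D) C D.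
Proof.
by move=> H; rewrite /pickI; case: pselect => [h|//]; case: (cid h) => I [].
Qed.

Section S2.
Variables (R : realType) (n : nat).

Lemma sum_enumA (A : pred (Int n)) (F : Int n -> R) (Q : pred (Int n)) :
  (forall w, w \notin A -> F w = 0) ->
  \sum_(j < #|A| | Q (enum_val j)) F (enum_val j) = \sum_(w | Q w) F w.
Proof.
move=> HF; rewrite -(big_enum_val_cond Q F) [RHS](bigID (fun w => w \in A)) /=.
rewrite [X in _ = _ + X]big1 ?addr0; last by move=> w /andP[_ /HF].
by apply: eq_bigl => w; rewrite andbC.
Qed.

Lemma models_world (T : seq (gci n)) (W : pworld n) :
  (forall g, List.In g T -> pworld_models W g) -> models_tbox (wI W) (Tw T (wv W)).
Proof.
move=> HT p /In_Tw [g [Hg [Hw ->]]] /=.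
by case: (HT g Hg) => //; rewrite Hw.
Qed.

Lemma upper (Pi : alcp_interp R n) (T : seq (gci n)) C D k :
  (forall i g, List.In g T -> pworld_models (world Pi i) g) ->
  \sum_(i | psat (wv (world Pi i)) k && `[< csub (wI (world Pi i)) C D >]) wprob Pi i
  + \sum_(w | `[< strongly_nonsub T w C D >] && psat w k) marg Pi w
  <= \sum_(v | psat v k) marg Pi v.
Proof.
move=> HT.
rewrite -(@sum_marg R n Pi (fun v => psat v k)).
rewrite -(@sum_marg R n Pi (fun w => `[< strongly_nonsub T w C D >] && psat w k)).
rewrite [X in _ <= X](bigID (fun i => `[< csub (wI (world Pi i)) C D >])) /= lerD2l.
idtac.
rewrite [X in _ <= X]big_mkcond [X in X <= _]big_mkcond /=.
apply: ler_sum => i _.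
case: asboolP => Hs /=; last by case: ifP => // _; apply: wprob_ge0.
case Hk: psat => //=.
rewrite asboolF //.
idtac.
by apply: Hs; apply: models_world; apply: HT.
Qed.
End S2.

Section S3.
Variables (R : realType) (n : nat).

Definition posA (P : {ffun Int n -> R}) : pred (Int n) := fun w => 0 < P w.

Lemma posA_out (P : {ffun Int n -> R}) : (forall v, 0 <= P v) ->
  forall w, w \notin posA P -> P w = 0.
Proof.
move=> H0 w; rewrite -topredE /= /posA -leNgt => Hw.
by apply/le_anti; rewrite Hw H0.
Qed.

Definition newI (P : {ffun Int n -> R}) (H0 : forall v, 0 <= P v)
  (H1 : \sum_v P v = 1) (J : Int n -> alc_interp) : alcp_interp R n.
Proof.
refine (@ALCPInterp R n #|posA P|
  (fun j => PWorld (J (enum_val j)) (enum_val j)) _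
  (fun j => P (enum_val j)) _ _).
- by move=> i j /(congr1 wv) /= /enum_val_inj.
- by move=> i; apply: H0.
- transitivity (\sum_(j < #|posA P| | predT (enum_val j)) P (enum_val j)); first by [].
  by rewrite (@sum_enumA R n (posA P) P predT (posA_out P H0)).
Defined.

Lemma marg_newI P H0 H1 J : marg (newI P H0 H1 J) = P.
Proof.
apply/ffunP => v; rewrite ffunE /=.
have := @sum_enumA R n (posA P) P (fun w => w == v) (posA_out P H0).
rewrite /= => ->.
by rewrite big_pred1_eq.
Qed.
End S3.

Theorem theorem4 (R : realType) (n : nat) (K : KB R n) (C D : concept)
  (k : pformula n) :
  ME_consistent K ->
  0 < probf (PME (kbR K)) k ->
  Bc K C D k =
  1 - (\sum_(w : Int n | `[< strongly_nonsub (kbT K) w C D >] && psat w k)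
          PME (kbR K) w) / probf (PME (kbR K)) k.
Proof.
move=> [_ [Pi0 [HT0 HM0]]] Hk.
set T := kbT K. set P := PME (kbR K).
set S := (\sum_(w : Int n | `[< strongly_nonsub T w C D >] && psat w k) P w).
have HP0 : forall v, 0 <= P v by move=> v; rewrite /P -HM0; apply: marg_ge0.
have HP1 : \sum_v P v = 1 by rewrite /P -HM0; apply: marg_sum1.
have Den : forall Pi, ME_model K Pi ->
    \sum_(i | psat (wv (world Pi i)) k) wprob Pi i = probf P k.
  move=> Pi [_ HM].
  have := @sum_marg R n Pi (fun v => psat v k); rewrite /= => ->.
  by rewrite HM.
set v := 1 - S / probf P k.
have alg : forall x, (x <= v) = (x * probf P k + S <= probf P k).
  move=> x; rewrite /v -(ler_pM2r Hk) mulrBl divfK ?gt_eqF // mul1r.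
  by rewrite lerBrDr.
have alg2 : forall x, (v <= x) = (probf P k <= x * probf P k + S).
  move=> x; rewrite /v -(ler_pM2r Hk) mulrBl divfK ?gt_eqF // mul1r.
  by rewrite lerBlDr.
have ub : forall Pi, ME_model K Pi -> Pr Pi C D k <= v.
  move=> Pi HPi.
  have := @upper R n Pi T C D k (proj1 HPi); rewrite (proj2 HPi) -/P => H.
  by rewrite /Pr Den // alg divfK ?gt_eqF.
pose Pi1 := @newI R n P HP0 HP1 (fun w => pickI T w C D).
have M1 : ME_model K Pi1.
  split; last exact: marg_newI.
  move=> j g Hg /=; rewrite /pworld_models /=.
  case Hw: (psat (enum_val j) (gk g)); [right|by left].
  suff : models_tbox (pickI T (enum_val j) C D) (Tw T (enum_val j)).
    by move=> /(_ _ (@Tw_In n T _ g Hg Hw)).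
  apply: pickI_models.
  have := enum_valP j; rewrite -topredE /= /posA.
  set w := enum_val j => Hpos.
  case: (pselect (exists i, wv (world Pi0 i) == w)) => [[i /eqP Hi]|Hn].
    exists (wI (world Pi0 i)); rewrite -Hi; apply: models_world => g' Hg'.
    exact: HT0.
  exfalso; move: Hpos; rewrite /P -HM0 ffunE big_pred0 ?ltxx //.
  by move=> i; apply/negP => Hi; apply: Hn; exists i.
have Pr1 : Pr Pi1 C D k = v.
  apply/le_anti; rewrite ub //=.
  rewrite /Pr Den // alg2 divfK ?gt_eqF //=.
  have := @sum_enumA R n (@posA R n P) P
    (fun w => psat w k && `[< csub (pickI T w C D) C D >]) (@posA_out R n P HP0).
  rewrite /= => ->.
  rewrite /probf [X in X <= _](bigID (fun w => `[< strongly_nonsub T w C D >])) /=.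
  have -> : \sum_(i | psat i k && `[< strongly_nonsub T i C D >]) P i = S.
    by apply: eq_bigl => w; rewrite andbC.
  rewrite addrC lerD2r.
  rewrite [X in X <= _]big_mkcond [X in _ <= X]big_mkcond /=.
  apply: ler_sum => w _.
  case Hkw: (psat w k) => //=.
  case: asboolP => Hs /=; first by case: ifP => // _; apply: HP0.
  rewrite asboolT //; apply: pickI_csub.
  case: (pselect (exists I, models_tbox I (Tw T w) /\ csub I C D)) => // Hn.
  exfalso; apply: Hs => I HI Hc; apply: Hn; exists I; exact: (conj HI Hc).
rewrite /Bc.
set E := (X in sup X).
have Ev : E v by exists Pi1.
have ubE : ubound E v by move=> x [Pi [HPi ->]]; apply: ub.
apply/le_anti/andP; split.
  by apply: ge_sup => //; exists v.
by apply: sup_upper_bound => //; split; [exists v | exists v].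
Qed.
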